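(* For arbitrary quasi-copulas $A$ and $B$ on $[0,1]^2$, the pairs $(A,A_M)$ and $(B_O,B)$ are imprecise copulas. The same holds in the discrete setting for discrete quasi-copulas on a mesh, with defects computed using rectangles with corners in the mesh.
   Context: A quasi-copula is $Q:[0,1]^2\to\mathbb{R}$ grounded ($Q(x,0)=Q(0,y)=0$), with neutral element $1$ ($Q(x,1)=x$, $Q(1,y)=y$), and with $V_Q(R)\ge0$ for each rectangle having a side on the boundary of $[0,1]^2$, where $V_Q([s_1,s_2]\times[t_1,t_2])=Q(s_1,t_1)+Q(s_2,t_2)-Q(s_2,t_1)-Q(s_1,t_2)$. Defects: for $\mathbf{x}\in[0,1]^2$ let $\mathcal{R}_\nearrow(\mathbf{x}),\mathcal{R}_\swarrow(\mathbf{x}),\mathcal{R}_\nwarrow(\mathbf{x}),\mathcal{R}_\searrow(\mathbf{x})$ be the sets of (possibly degenerate) rectangles in $[0,1]^2$ having $\mathbf{x}$ as southwest, northeast, southeast, northwest corner respectively; $D^Q_\bullet(\mathbf{x})=\inf\{V_Q(R):R\in\mathcal{R}_\bullet(\mathbf{x})\}$; $D^Q_M=\min(D^Q_\nearrow,D^Q_\swarrow)$, $D^Q_O=\min(D^Q_\nwarrow,D^Q_\searrow)$; $Q_M=Q-D^Q_M$ and $Q_O=Q+D^Q_O$. An imprecise copula is a pair $(A,B)$ of grounded functions with neutral element $1$ such that for every rectangle with southwest, southeast, northeast, northwest corners $\mathbf{a},\mathbf{b},\mathbf{c},\mathbf{d}$: $A(\mathbf{a})+B(\mathbf{c})-A(\mathbf{b})-A(\mathbf{d})\ge0$,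 $B(\mathbf{a})+A(\mathbf{c})-A(\mathbf{b})-A(\mathbf{d})\ge0$, $B(\mathbf{a})+B(\mathbf{c})-B(\mathbf{b})-A(\mathbf{d})\ge0$, $B(\mathbf{a})+B(\mathbf{c})-A(\mathbf{b})-B(\mathbf{d})\ge0$. (Discrete versions: same definitions with $[0,1]^2$ replaced by a mesh $\delta_x\times\delta_y$, all points and rectangle corners taken in the mesh.) *)

(* Defs.v *)
From Stdlib Require Import Reals List ClassicalEpsilon.
Open Scope R_scope.

Definition is_lower_bound (S : R -> Prop) (m : R) : Prop :=
  forall v, S v -> m <= v.
Definition is_glb (S : R -> Prop) (m : R) : Prop :=
  is_lower_bound S m /\ (forall m', is_lower_bound S m' -> m' <= m).

Definition Rinf (S : R -> Prop) : R :=
  epsilon (inhabits 0) (fun m => is_glb S m).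

Definition unit_int (x : R) : Prop := 0 <= x <= 1.

Definition is_mesh (D : R -> Prop) : Prop :=
  (exists l : list R, forall x, D x <-> In x l) /\ D 0 /\ D 1 /\
  (forall x, D x -> 0 <= x <= 1).

Definition V (Q : R -> R -> R) (s1 s2 t1 t2 : R) : R :=
  Q s1 t1 + Q s2 t2 - Q s2 t1 - Q s1 t2.

Definition grounded_neutral (Dx Dy : R -> Prop) (Q : R -> R -> R) : Prop :=
  (forall x, Dx x -> Q x 0 = 0) /\ (forall y, Dy y -> Q 0 y = 0) /\
  (forall x, Dx x -> Q x 1 = x) /\ (forall y, Dy y -> Q 1 y = y).

(* Quasi-copula on Dx x Dy (Dx = Dy = unit_int: the usual notion;
   meshes: discrete quasi-copula). *)
Definition quasi_copula (Dx Dy : R -> Prop) (Q : R -> R -> R) : Prop :=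
  grounded_neutral Dx Dy Q /\
  (forall s1 s2 t1 t2, Dx s1 -> Dx s2 -> Dy t1 -> Dy t2 ->
     s1 <= s2 -> t1 <= t2 -> (s1 = 0 \/ s2 = 1 \/ t1 = 0 \/ t2 = 1) ->
     0 <= V Q s1 s2 t1 t2).

Definition D_ne (Dx Dy : R -> Prop) (Q : R -> R -> R) (x y : R) : R :=
  Rinf (fun v => exists s t, Dx s /\ Dy t /\ x <= s /\ y <= t /\
                   v = V Q x s y t).
Definition D_sw (Dx Dy : R -> Prop) (Q : R -> R -> R) (x y : R) : R :=
  Rinf (fun v => exists s t, Dx s /\ Dy t /\ s <= x /\ t <= y /\
                   v = V Q s x t y).
Definition D_nw (Dx Dy : R -> Prop) (Q : R -> R -> R) (x y : R) : R :=
  Rinf (fun v => exists s t, Dx s /\ Dy t /\ s <= x /\ y <= t /\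
                   v = V Q s x y t).
Definition D_se (Dx Dy : R -> Prop) (Q : R -> R -> R) (x y : R) : R :=
  Rinf (fun v => exists s t, Dx s /\ Dy t /\ x <= s /\ t <= y /\
                   v = V Q x s t y).

Definition D_M Dx Dy Q x y : R := Rmin (D_ne Dx Dy Q x y) (D_sw Dx Dy Q x y).
Definition D_O Dx Dy Q x y : R := Rmin (D_nw Dx Dy Q x y) (D_se Dx Dy Q x y).

Definition Q_M Dx Dy Q : R -> R -> R := fun x y => Q x y - D_M Dx Dy Q x y.
Definition Q_O Dx Dy Q : R -> R -> R := fun x y => Q x y + D_O Dx Dy Q x y.

(* Imprecise copula (A,B) on Dx x Dy; rectangle [s1,s2]x[t1,t2] has
   a=(s1,t1) sw, b=(s2,t1) se, c=(s2,t2) ne, d=(s1,t2) nw. *)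
Definition imprecise_copula (Dx Dy : R -> Prop) (A B : R -> R -> R) : Prop :=
  grounded_neutral Dx Dy A /\ grounded_neutral Dx Dy B /\
  (forall s1 s2 t1 t2, Dx s1 -> Dx s2 -> Dy t1 -> Dy t2 ->
     s1 <= s2 -> t1 <= t2 ->
     0 <= A s1 t1 + B s2 t2 - A s2 t1 - A s1 t2 /\
     0 <= B s1 t1 + A s2 t2 - A s2 t1 - A s1 t2 /\
     0 <= B s1 t1 + B s2 t2 - B s2 t1 - A s1 t2 /\
     0 <= B s1 t1 + B s2 t2 - A s2 t1 - B s1 t2).

(* Main.v *)
Require Import Defs.
From Stdlib Require Import Reals Lra ClassicalEpsilon.
Open Scope R_scope.

Definition okD (D : R -> Prop) : Prop := D 0 /\ D 1 /\ (forall x, D x -> 0 <= x <= 1).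

Lemma glb_ex (S : R -> Prop) : (exists v, S v) -> is_lower_bound S (-2) -> is_glb S (Rinf S).
Proof.
  intros [v0 Hv0] Hlb. unfold Rinf. apply epsilon_spec.
  set (E := fun u => S (-u)).
  destruct (completeness E) as [m [Hub Hl]].
  - exists 2. intros u Hu. apply Hlb in Hu. lra.
  - exists (-v0). unfold E. rewrite Ropp_involutive. auto.
  - exists (-m). split.
    + intros v Hv. assert (H : E (-v)) by (unfold E; rewrite Ropp_involutive; auto).
      apply Hub in H. lra.
    + intros m' Hm'. assert (H : is_upper_bound E (-m')).
      { intros u Hu. apply Hm' in Hu. lra. }
      apply Hl in H. lra.
Qed.

Section S.
Variables (Dx Dy : R -> Prop) (Q : R -> R -> R).
Hypothesis HQ : quasi_copula Dx Dy Q.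
Hypothesis HDx : okD Dx.
Hypothesis HDy : okD Dy.

Lemma Q_bnd x y : Dx x -> Dy y -> 0 <= Q x y <= 1.
Proof.
  intros Hx Hy. destruct HQ as [[g1 [g2 [g3 g4]]] HV].
  destruct HDx as [x0 [x1 bx]]. destruct HDy as [y0 [y1 bby]].
  pose proof (bx x Hx). pose proof (bby y Hy).
  pose proof (HV 0 x 0 y x0 Hx y0 Hy ltac:(lra) ltac:(lra) ltac:(left; reflexivity)).
  pose proof (HV 0 x y 1 x0 Hx Hy y1 ltac:(lra) ltac:(lra) ltac:(left; reflexivity)).
  pose proof (g1 0 x0). pose proof (g1 x Hx). pose proof (g2 y Hy). pose proof (g2 1 y1).
  pose proof (g3 x Hx). unfold V in *. lra.
Qed.

Lemma V_lb a b c d : Dx a -> Dx b -> Dy c -> Dy d -> -2 <= V Q a b c d.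
Proof.
  intros. pose proof (Q_bnd a c). pose proof (Q_bnd a d).
  pose proof (Q_bnd b c). pose proof (Q_bnd b d). unfold V. intuition lra.
Qed.

Lemma ne_glb x y : Dx x -> Dy y -> is_glb (fun v => exists s t, Dx s /\ Dy t /\ x <= s /\ y <= t /\
                   v = V Q x s y t) (D_ne Dx Dy Q x y).
Proof.
  intros Hx Hy. apply glb_ex.
  - exists (V Q x x y y), x, y. repeat split; auto; lra.
  - intros v (s&t&Hs&Ht&_&_&->). apply V_lb; auto.
Qed.
Lemma sw_glb x y : Dx x -> Dy y -> is_glb (fun v => exists s t, Dx s /\ Dy t /\ s <= x /\ t <= y /\
                   v = V Q s x t y) (D_sw Dx Dy Q x y).
Proof.
  intros Hx Hy. apply glb_ex.
  - exists (V Q x x y y), x, y. repeat split; auto; lra.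
  - intros v (s&t&Hs&Ht&_&_&->). apply V_lb; auto.
Qed.
Lemma nw_glb x y : Dx x -> Dy y -> is_glb (fun v => exists s t, Dx s /\ Dy t /\ s <= x /\ y <= t /\
                   v = V Q s x y t) (D_nw Dx Dy Q x y).
Proof.
  intros Hx Hy. apply glb_ex.
  - exists (V Q x x y y), x, y. repeat split; auto; lra.
  - intros v (s&t&Hs&Ht&_&_&->). apply V_lb; auto.
Qed.
Lemma se_glb x y : Dx x -> Dy y -> is_glb (fun v => exists s t, Dx s /\ Dy t /\ x <= s /\ t <= y /\
                   v = V Q x s t y) (D_se Dx Dy Q x y).
Proof.
  intros Hx Hy. apply glb_ex.
  - exists (V Q x x y y), x, y. repeat split; auto; lra.
  - intros v (s&t&Hs&Ht&_&_&->). apply V_lb; auto.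
Qed.

Lemma ne_le x y s t : Dx x -> Dy y -> Dx s -> Dy t -> x <= s -> y <= t ->
  D_ne Dx Dy Q x y <= V Q x s y t.
Proof. intros. destruct (ne_glb x y) as [Hg _]; auto. apply Hg. exists s, t. auto. Qed.
Lemma sw_le x y s t : Dx x -> Dy y -> Dx s -> Dy t -> s <= x -> t <= y ->
  D_sw Dx Dy Q x y <= V Q s x t y.
Proof. intros. destruct (sw_glb x y) as [Hg _]; auto. apply Hg. exists s, t. auto. Qed.
Lemma nw_le x y s t : Dx x -> Dy y -> Dx s -> Dy t -> s <= x -> y <= t ->
  D_nw Dx Dy Q x y <= V Q s x y t.
Proof. intros. destruct (nw_glb x y) as [Hg _]; auto. apply Hg. exists s, t. auto. Qed.
Lemma se_le x y s t : Dx x -> Dy y -> Dx s -> Dy t -> x <= s -> t <= y ->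
  D_se Dx Dy Q x y <= V Q x s t y.
Proof. intros. destruct (se_glb x y) as [Hg _]; auto. apply Hg. exists s, t. auto. Qed.

Lemma ne_ge x y m : Dx x -> Dy y ->
  (forall s t, Dx s -> Dy t -> x <= s -> y <= t -> m <= V Q x s y t) -> m <= D_ne Dx Dy Q x y.
Proof. intros Hx Hy H. destruct (ne_glb x y) as [_ H2]; auto. apply H2.
  intros v (s&t&?&?&?&?&->). auto. Qed.
Lemma sw_ge x y m : Dx x -> Dy y ->
  (forall s t, Dx s -> Dy t -> s <= x -> t <= y -> m <= V Q s x t y) -> m <= D_sw Dx Dy Q x y.
Proof. intros Hx Hy H. destruct (sw_glb x y) as [_ H2]; auto. apply H2.
  intros v (s&t&?&?&?&?&->). auto. Qed.
Lemma nw_ge x y m : Dx x -> Dy y ->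
  (forall s t, Dx s -> Dy t -> s <= x -> y <= t -> m <= V Q s x y t) -> m <= D_nw Dx Dy Q x y.
Proof. intros Hx Hy H. destruct (nw_glb x y) as [_ H2]; auto. apply H2.
  intros v (s&t&?&?&?&?&->). auto. Qed.
Lemma se_ge x y m : Dx x -> Dy y ->
  (forall s t, Dx s -> Dy t -> x <= s -> t <= y -> m <= V Q x s t y) -> m <= D_se Dx Dy Q x y.
Proof. intros Hx Hy H. destruct (se_glb x y) as [_ H2]; auto. apply H2.
  intros v (s&t&?&?&?&?&->). auto. Qed.

Ltac disj := first [left; lra | right; left; lra | right; right; left; lra | right; right; right; lra].

Ltac vpos x0 y0 :=
  let HV := fresh in
  destruct HQ as [_ HV];
  destruct HDx as [_ [_ bx]]; destruct HDy as [_ [_ bby]];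
  intros s t Hs Ht H1 H2;
  pose proof (bx s Hs); pose proof (bby t Ht);
  pose proof (bx x0 ltac:(assumption)); pose proof (bby y0 ltac:(assumption));
  apply HV; auto; try lra; disj.

Lemma DM_zero x y : Dx x -> Dy y -> (x = 0 \/ x = 1 \/ y = 0 \/ y = 1) -> D_M Dx Dy Q x y = 0.
Proof.
  intros Hx Hy Hb. unfold D_M.
  assert (E1 : D_ne Dx Dy Q x y = 0).
  { apply Rle_antisym.
    - pose proof (ne_le x y x y Hx Hy Hx Hy (Rle_refl _) (Rle_refl _)). unfold V in *; lra.
    - apply ne_ge; auto.
      destruct HQ as [_ HV];
      destruct HDx as [_ [_ bx]]; destruct HDy as [_ [_ bby]];
      intros s t Hs Ht H1 H2;
      pose proof (bx s Hs); pose proof (bby t Ht);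
      pose proof (bx x Hx); pose proof (bby y Hy).
      destruct (Req_dec s x) as [->|Hn]. unfold V; lra.
      destruct (Req_dec t y) as [->|Hn2]. unfold V; lra.
      apply HV; auto. lra. }
  assert (E2 : D_sw Dx Dy Q x y = 0).
  { apply Rle_antisym.
    - pose proof (sw_le x y x y Hx Hy Hx Hy (Rle_refl _) (Rle_refl _)). unfold V in *; lra.
    - apply sw_ge; auto.
      destruct HQ as [_ HV];
      destruct HDx as [_ [_ bx]]; destruct HDy as [_ [_ bby]];
      intros s t Hs Ht H1 H2;
      pose proof (bx s Hs); pose proof (bby t Ht);
      pose proof (bx x Hx); pose proof (bby y Hy).
      destruct (Req_dec s x) as [->|Hn]. unfold V; lra.
      destruct (Req_dec t y) as [->|Hn2]. unfold V; lra.
      apply HV; auto. lra. }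
  rewrite E1, E2. unfold Rmin. destruct Rle_dec; lra.
Qed.

Lemma DO_zero x y : Dx x -> Dy y -> (x = 0 \/ x = 1 \/ y = 0 \/ y = 1) -> D_O Dx Dy Q x y = 0.
Proof.
  intros Hx Hy Hb. unfold D_O.
  assert (E1 : D_nw Dx Dy Q x y = 0).
  { apply Rle_antisym.
    - pose proof (nw_le x y x y Hx Hy Hx Hy (Rle_refl _) (Rle_refl _)). unfold V in *; lra.
    - apply nw_ge; auto.
      destruct HQ as [_ HV];
      destruct HDx as [_ [_ bx]]; destruct HDy as [_ [_ bby]];
      intros s t Hs Ht H1 H2;
      pose proof (bx s Hs); pose proof (bby t Ht);
      pose proof (bx x Hx); pose proof (bby y Hy).
      destruct (Req_dec s x) as [->|Hn]. unfold V; lra.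
      destruct (Req_dec t y) as [->|Hn2]. unfold V; lra.
      apply HV; auto. lra. }
  assert (E2 : D_se Dx Dy Q x y = 0).
  { apply Rle_antisym.
    - pose proof (se_le x y x y Hx Hy Hx Hy (Rle_refl _) (Rle_refl _)). unfold V in *; lra.
    - apply se_ge; auto.
      destruct HQ as [_ HV];
      destruct HDx as [_ [_ bx]]; destruct HDy as [_ [_ bby]];
      intros s t Hs Ht H1 H2;
      pose proof (bx s Hs); pose proof (bby t Ht);
      pose proof (bx x Hx); pose proof (bby y Hy).
      destruct (Req_dec s x) as [->|Hn]. unfold V; lra.
      destruct (Req_dec t y) as [->|Hn2]. unfold V; lra.
      apply HV; auto. lra. }
  rewrite E1, E2. unfold Rmin. destruct Rle_dec; lra.
Qed.


Lemma gn_Q : grounded_neutral Dx Dy Q.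
Proof. destruct HQ; auto. Qed.

Lemma M_case : imprecise_copula Dx Dy Q (Q_M Dx Dy Q).
Proof.
  pose proof gn_Q as [g1 [g2 [g3 g4]]].
  destruct HDx as [x0 [x1 bx]]. destruct HDy as [y0 [y1 bby]].
  split; [exact gn_Q|]. split.
  { unfold Q_M. repeat split; intros z Hz.
    - rewrite DM_zero; auto. rewrite g1; auto; lra.
    - rewrite DM_zero; auto. rewrite g2; auto; lra.
    - rewrite DM_zero; auto. rewrite g3; auto; lra.
    - rewrite DM_zero; auto. rewrite g4; auto; lra. }
  intros s1 s2 t1 t2 Hs1 Hs2 Ht1 Ht2 Hs Ht. unfold Q_M, D_M.
  pose proof (Rmin_l (D_ne Dx Dy Q s1 t1) (D_sw Dx Dy Q s1 t1)) as ma1.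
  pose proof (Rmin_r (D_ne Dx Dy Q s1 t1) (D_sw Dx Dy Q s1 t1)) as ma2.
  pose proof (Rmin_l (D_ne Dx Dy Q s2 t2) (D_sw Dx Dy Q s2 t2)) as mc1.
  pose proof (Rmin_r (D_ne Dx Dy Q s2 t2) (D_sw Dx Dy Q s2 t2)) as mc2.
  set (Ma := Rmin (D_ne Dx Dy Q s1 t1) (D_sw Dx Dy Q s1 t1)) in *.
  set (Mc := Rmin (D_ne Dx Dy Q s2 t2) (D_sw Dx Dy Q s2 t2)) in *.
  pose proof (ne_le s1 t1 s2 t2 Hs1 Ht1 Hs2 Ht2 Hs Ht) as Ea.
  pose proof (sw_le s2 t2 s1 t1 Hs2 Ht2 Hs1 Ht1 Hs Ht) as Ec.
  split; [unfold V in *; lra|]. split; [unfold V in *; lra|].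
  split.
  - assert (Hb : Ma + Mc - V Q s1 s2 t1 t2 <= Rmin (D_ne Dx Dy Q s2 t1) (D_sw Dx Dy Q s2 t1)).
    { apply Rmin_glb.
      - apply ne_ge; auto. intros s3 t3 Hs3 Ht3 H1 H2.
        destruct (Rle_dec t3 t2).
        + pose proof (ne_le s1 t1 s3 t3 Hs1 Ht1 Hs3 Ht3 ltac:(lra) ltac:(lra)).
          pose proof (sw_le s2 t2 s1 t3 Hs2 Ht2 Hs1 Ht3 ltac:(lra) ltac:(lra)).
          unfold V in *; lra.
        + pose proof (ne_le s1 t1 s3 t2 Hs1 Ht1 Hs3 Ht2 ltac:(lra) ltac:(lra)).
          pose proof (ne_le s2 t2 s3 t3 Hs2 Ht2 Hs3 Ht3 ltac:(lra) ltac:(lra)).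
          unfold V in *; lra.
      - apply sw_ge; auto. intros s0 t0 Hs0 Ht0 H1 H2.
        destruct (Rle_dec s0 s1).
        + pose proof (sw_le s2 t2 s1 t0 Hs2 Ht2 Hs1 Ht0 ltac:(lra) ltac:(lra)).
          pose proof (sw_le s1 t1 s0 t0 Hs1 Ht1 Hs0 Ht0 ltac:(lra) ltac:(lra)).
          unfold V in *; lra.
        + pose proof (sw_le s2 t2 s0 t0 Hs2 Ht2 Hs0 Ht0 ltac:(lra) ltac:(lra)).
          pose proof (ne_le s1 t1 s0 t2 Hs1 Ht1 Hs0 Ht2 ltac:(lra) ltac:(lra)).
          unfold V in *; lra. }
    unfold V in *; lra.
  - assert (Hd : Ma + Mc - V Q s1 s2 t1 t2 <= Rmin (D_ne Dx Dy Q s1 t2) (D_sw Dx Dy Q s1 t2)).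
    { apply Rmin_glb.
      - apply ne_ge; auto. intros s3 t3 Hs3 Ht3 H1 H2.
        destruct (Rle_dec s3 s2).
        + pose proof (ne_le s1 t1 s3 t3 Hs1 Ht1 Hs3 Ht3 ltac:(lra) ltac:(lra)).
          pose proof (sw_le s2 t2 s3 t1 Hs2 Ht2 Hs3 Ht1 ltac:(lra) ltac:(lra)).
          unfold V in *; lra.
        + pose proof (ne_le s1 t1 s2 t3 Hs1 Ht1 Hs2 Ht3 ltac:(lra) ltac:(lra)).
          pose proof (ne_le s2 t2 s3 t3 Hs2 Ht2 Hs3 Ht3 ltac:(lra) ltac:(lra)).
          unfold V in *; lra.
      - apply sw_ge; auto. intros s0 t0 Hs0 Ht0 H1 H2.
        destruct (Rle_dec t0 t1).
        + pose proof (sw_le s1 t1 s0 t0 Hs1 Ht1 Hs0 Ht0 ltac:(lra) ltac:(lra)).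
          pose proof (sw_le s2 t2 s0 t1 Hs2 Ht2 Hs0 Ht1 ltac:(lra) ltac:(lra)).
          unfold V in *; lra.
        + pose proof (sw_le s2 t2 s0 t0 Hs2 Ht2 Hs0 Ht0 ltac:(lra) ltac:(lra)).
          pose proof (ne_le s1 t1 s2 t0 Hs1 Ht1 Hs2 Ht0 ltac:(lra) ltac:(lra)).
          unfold V in *; lra. }
    unfold V in *; lra.
Qed.

Lemma O_case : imprecise_copula Dx Dy (Q_O Dx Dy Q) Q.
Proof.
  pose proof gn_Q as [g1 [g2 [g3 g4]]].
  destruct HDx as [x0 [x1 bx]]. destruct HDy as [y0 [y1 bby]].
  split.
  { unfold Q_O. repeat split; intros z Hz.
    - rewrite DO_zero; auto. rewrite g1; auto; lra.
    - rewrite DO_zero; auto. rewrite g2; auto; lra.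
    - rewrite DO_zero; auto. rewrite g3; auto; lra.
    - rewrite DO_zero; auto. rewrite g4; auto; lra. }
  split; [exact gn_Q|].
  intros s1 s2 t1 t2 Hs1 Hs2 Ht1 Ht2 Hs Ht. unfold Q_O, D_O.
  pose proof (Rmin_l (D_nw Dx Dy Q s2 t1) (D_se Dx Dy Q s2 t1)) as mb1.
  pose proof (Rmin_r (D_nw Dx Dy Q s2 t1) (D_se Dx Dy Q s2 t1)) as mb2.
  pose proof (Rmin_l (D_nw Dx Dy Q s1 t2) (D_se Dx Dy Q s1 t2)) as md1.
  pose proof (Rmin_r (D_nw Dx Dy Q s1 t2) (D_se Dx Dy Q s1 t2)) as md2.
  set (Mb := Rmin (D_nw Dx Dy Q s2 t1) (D_se Dx Dy Q s2 t1)) in *.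
  set (Md := Rmin (D_nw Dx Dy Q s1 t2) (D_se Dx Dy Q s1 t2)) in *.
  pose proof (nw_le s2 t1 s1 t2 Hs2 Ht1 Hs1 Ht2 Hs Ht) as Eb.
  pose proof (se_le s1 t2 s2 t1 Hs1 Ht2 Hs2 Ht1 Hs Ht) as Ed.
  split; [|split; [|split; unfold V in *; lra]].
  - assert (Ha : Mb + Md - V Q s1 s2 t1 t2 <= Rmin (D_nw Dx Dy Q s1 t1) (D_se Dx Dy Q s1 t1)).
    { apply Rmin_glb.
      - apply nw_ge; auto. intros s0 t3 Hs0 Ht3 H1 H2.
        destruct (Rle_dec t3 t2).
        + pose proof (nw_le s2 t1 s0 t3 Hs2 Ht1 Hs0 Ht3 ltac:(lra) ltac:(lra)).
          pose proof (se_le s1 t2 s2 t3 Hs1 Ht2 Hs2 Ht3 ltac:(lra) ltac:(lra)).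
          unfold V in *; lra.
        + pose proof (nw_le s1 t2 s0 t3 Hs1 Ht2 Hs0 Ht3 ltac:(lra) ltac:(lra)).
          pose proof (nw_le s2 t1 s0 t2 Hs2 Ht1 Hs0 Ht2 ltac:(lra) ltac:(lra)).
          unfold V in *; lra.
      - apply se_ge; auto. intros s3 t0 Hs3 Ht0 H1 H2.
        destruct (Rle_dec s3 s2).
        + pose proof (se_le s1 t2 s3 t0 Hs1 Ht2 Hs3 Ht0 ltac:(lra) ltac:(lra)).
          pose proof (nw_le s2 t1 s3 t2 Hs2 Ht1 Hs3 Ht2 ltac:(lra) ltac:(lra)).
          unfold V in *; lra.
        + pose proof (se_le s1 t2 s2 t0 Hs1 Ht2 Hs2 Ht0 ltac:(lra) ltac:(lra)).
          pose proof (se_le s2 t1 s3 t0 Hs2 Ht1 Hs3 Ht0 ltac:(lra) ltac:(lra)).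
          unfold V in *; lra. }
    unfold V in *; lra.
  - assert (Hc : Mb + Md - V Q s1 s2 t1 t2 <= Rmin (D_nw Dx Dy Q s2 t2) (D_se Dx Dy Q s2 t2)).
    { apply Rmin_glb.
      - apply nw_ge; auto. intros s0 t3 Hs0 Ht3 H1 H2.
        destruct (Rle_dec s0 s1).
        + pose proof (nw_le s1 t2 s0 t3 Hs1 Ht2 Hs0 Ht3 ltac:(lra) ltac:(lra)).
          pose proof (nw_le s2 t1 s1 t3 Hs2 Ht1 Hs1 Ht3 ltac:(lra) ltac:(lra)).
          unfold V in *; lra.
        + pose proof (nw_le s2 t1 s0 t3 Hs2 Ht1 Hs0 Ht3 ltac:(lra) ltac:(lra)).
          pose proof (se_le s1 t2 s0 t1 Hs1 Ht2 Hs0 Ht1 ltac:(lra) ltac:(lra)).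
          unfold V in *; lra.
      - apply se_ge; auto. intros s3 t0 Hs3 Ht0 H1 H2.
        destruct (Rle_dec t0 t1).
        + pose proof (se_le s1 t2 s3 t1 Hs1 Ht2 Hs3 Ht1 ltac:(lra) ltac:(lra)).
          pose proof (se_le s2 t1 s3 t0 Hs2 Ht1 Hs3 Ht0 ltac:(lra) ltac:(lra)).
          unfold V in *; lra.
        + pose proof (se_le s1 t2 s3 t0 Hs1 Ht2 Hs3 Ht0 ltac:(lra) ltac:(lra)).
          pose proof (nw_le s2 t1 s1 t0 Hs2 Ht1 Hs1 Ht0 ltac:(lra) ltac:(lra)).
          unfold V in *; lra. }
    unfold V in *; lra.
Qed.

End S.

Lemma ok_unit : okD unit_int.
Proof. unfold okD, unit_int. repeat split; intros; lra. Qed.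

Lemma ok_mesh D : is_mesh D -> okD D.
Proof. intros [_ [h0 [h1 hb]]]. exact (conj h0 (conj h1 hb)). Qed.

Theorem mainTheorem7 :
  (forall A B : R -> R -> R,
     quasi_copula unit_int unit_int A -> quasi_copula unit_int unit_int B ->
     imprecise_copula unit_int unit_int A (Q_M unit_int unit_int A) /\
     imprecise_copula unit_int unit_int (Q_O unit_int unit_int B) B) /\
  (forall (Dx Dy : R -> Prop), is_mesh Dx -> is_mesh Dy ->
   forall A B : R -> R -> R,
     quasi_copula Dx Dy A -> quasi_copula Dx Dy B ->
     imprecise_copula Dx Dy A (Q_M Dx Dy A) /\
     imprecise_copula Dx Dy (Q_O Dx Dy B) B).
Proof.
  split.
  - intros A B HA HB. split.
    + apply M_case; auto; apply ok_unit.
    + apply O_case; auto; apply ok_unit.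
  - intros Dx Dy Hx Hy A B HA HB. split.
    + apply M_case; auto; apply ok_mesh; auto.
    + apply O_case; auto; apply ok_mesh; auto.
Qed.
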